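(* Let $n>1$ and $\lambda>1$. The reducing submodules $\mathbb A^{(\lambda)}_{\rm triv}(\mathbb D^n)$ and $\mathbb A^{(\lambda)}_{\rm sign}(\mathbb D^n)$ of $\mathbb A^{(\lambda)}(\mathbb D^n)$ over the ring $\mathbb C[z_1,\ldots,z_n]^{\mathfrak S_n}$ are not unitarily equivalent; i.e. there is no unitary $U:\mathbb A^{(\lambda)}_{\rm triv}(\mathbb D^n)\to\mathbb A^{(\lambda)}_{\rm sign}(\mathbb D^n)$ with $UM_f=M_fU$ for all symmetric polynomials $f$.
   Context: $\mathbb A^{(\lambda)}(\mathbb D^n)$ ($\lambda>1$) is the weighted Bergman space of holomorphic functions on $\mathbb D^n$ square integrable with respect to $\big(\frac{\lambda-1}{\pi}\big)^n\prod_i(1-|z_i|^2)^{\lambda-2}dV$, with reproducing kernel $\prod_i(1-z_i\bar w_i)^{-\lambda}$. $\mathfrak S_n$ acts by permuting coordinates; $\mathbb C[z_1,\dots,z_n]^{\mathfrak S_n}$ is the ring of symmetric polynomials acting by multiplication. $\mathbb A^{(\lambda)}_{\rm triv}(\mathbb D^n)$ is the subspace of symmetric functions ($f(\sigma\cdot z)=f(z)$ for all $\sigma$) and $\mathbb A^{(\lambda)}_{\rm sign}(\mathbb D^n)$ the subspace of antisymmetric functions ($f(\sigma\cdot z)=\operatorname{sgn}(\sigma)f(z)$) in $\mathbb A^{(\lambda)}(\mathbb D^n)$. *)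

(* Defs.v *)
From HB Require Import structures.
From mathcomp Require Import all_boot all_order all_algebra all_fingroup.
From mathcomp Require Import reals.
From mathcomp Require Import complex.
From mathcomp Require Import mpoly.
Set Implicit Arguments. Unset Strict Implicit. Unset Printing Implicit Defensive.
Import GRing.Theory Num.Theory.
Local Open Scope ring_scope.

(* An element of A^(lambda)(D^n) is represented by its Taylor coefficients
   f(z) = \sum_alpha a alpha z^alpha, alpha ranging over multi-indices. *)
Definition coeffs (R : realType) (n : nat) := 'X_{1..n} -> R[i].

Definition rising (R : realType) (l : R) (k : nat) : R :=
  \prod_(j < k) (l + j%:R).

(* ||z^alpha||^2 in A^(lambda)(D^n): the reproducing kernel
   prod_i (1 - z_i conj w_i)^(-lambda)
   = sum_alpha prod_i ((lambda)_{alpha_i}/alpha_i!) z^alpha conj(w)^alpha,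
   hence the monomials are orthogonal with ||z^alpha||^2 = prod_i alpha_i!/(lambda)_{alpha_i}. *)
Definition bweight (R : realType) (n : nat) (l : R) (m : 'X_{1..n}) : R :=
  \prod_(i < n) ((m i)`!%:R / rising l (m i)).

Definition sqmod (R : realType) (c : R[i]) : R := (complex.Re c) ^+ 2 + (complex.Im c) ^+ 2.

Definition bnorm2_le (R : realType) (n : nat) (l : R) (a : coeffs R n) (B : R) : Prop :=
  forall s : seq 'X_{1..n}, uniq s -> \sum_(m <- s) bweight l m * sqmod (a m) <= B.

Definition inBergman (R : realType) (n : nat) (l : R) (a : coeffs R n) : Prop :=
  exists B : R, bnorm2_le l a B.

(* coefficients of f(sigma . z), where (sigma . z)_i = z_(sigma i);
   consistent with mpoly's  (msym s p)@_m = p@_(m # s) *)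
Definition cperm (R : realType) (n : nat) (s : 'S_n) (a : coeffs R n) : coeffs R n :=
  fun m => a [multinom m (s i) | i < n].

Definition in_triv (R : realType) (n : nat) (l : R) (a : coeffs R n) : Prop :=
  inBergman l a /\ forall s : 'S_n, cperm s a = a.

Definition in_sign (R : realType) (n : nat) (l : R) (a : coeffs R n) : Prop :=
  inBergman l a /\ forall s : 'S_n, cperm s a = (fun m => (-1) ^+ odd_perm s * a m).

Definition mulop (R : realType) (n : nat) (p : {mpoly R[i][n]}) (a : coeffs R n)
  : coeffs R n :=
  fun m => \sum_(b <- msupp p) p@_b * (if (b <= m)%MM then a (m - b)%MM else 0).

Definition intertwining_unitary (R : realType) (n : nat) (l : R)
  (U : coeffs R n -> coeffs R n) : Prop :=
  [/\ (forall a, in_triv l a -> in_sign l (U a)),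
      (forall (c : R[i]) a b, in_triv l a -> in_triv l b ->
         U (fun m => c * a m + b m) = (fun m => c * U a m + U b m)),
      (forall a, in_triv l a -> forall B, bnorm2_le l a B <-> bnorm2_le l (U a) B),
      (forall b, in_sign l b -> exists2 a, in_triv l a & U a = b) &
      (forall p : {mpoly R[i][n]}, p \is symmetric ->
         forall a, in_triv l a -> U (mulop p a) = mulop p (U a))].

(* Main.v *)
Require Import Defs.
From HB Require Import structures.
From mathcomp Require Import all_boot all_order all_algebra all_fingroup.
From mathcomp Require Import reals.
From mathcomp Require Import complex.
From mathcomp Require Import mpoly.
From Stdlib Require Import FunctionalExtensionality.
From mathcomp Require Import ring lra.
Import Order.TTheory GRing.Theory Num.Theory.
Local Open Scope ring_scope.

Section S.
Context {R : realType} {n : nat}.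

Definition mone : 'X_{1..n} := [multinom 1%N | i < n].
Definition delta (m0 : 'X_{1..n}) : coeffs R n := fun m => (m == m0)%:R.

Lemma sqmod0 : sqmod (0 : R[i]) = 0.
Proof. by rewrite /sqmod /= expr0n /= addr0. Qed.
Lemma sqmod1 : sqmod (1 : R[i]) = 1.
Proof. by rewrite /sqmod /= expr0n /= addr0 expr1n. Qed.
Lemma sqmod_ge0 (c : R[i]) : 0 <= sqmod c.
Proof. by rewrite /sqmod addr_ge0 // sqr_ge0. Qed.

Lemma perm_mone (s : 'S_n) (m : 'X_{1..n}) :
  ([multinom m (s i) | i < n] == mone) = (m == mone).
Proof.
apply/eqP/eqP => [/mnmP H|->]; apply/mnmP => j.
  by have := H (s^-1%g j); rewrite !mnmE permKV.
by rewrite !mnmE.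
Qed.

Lemma perm_0 (s : 'S_n) (m : 'X_{1..n}) :
  ([multinom m (s i) | i < n] == 0%MM) = (m == 0%MM).
Proof.
apply/eqP/eqP => [/mnmP H|->]; apply/mnmP => j.
  by have := H (s^-1%g j); rewrite !mnmE ?mnm0E permKV.
by rewrite mnmE ?mnm0E.
Qed.

Lemma rising_gt0 (l : R) k : 0 < l -> 0 < rising l k.
Proof.
move=> l0; rewrite /rising; apply: prodr_gt0 => j _.
have := ler0n R j; lra.
Qed.

Lemma bweight_ge0 (l : R) (m : 'X_{1..n}) : 0 < l -> 0 <= bweight l m.
Proof.
move=> l0; rewrite /bweight; apply: prodr_ge0 => i _.
by rewrite divr_ge0 // ?ler0n // ltW // rising_gt0.
Qed.

Lemma bweight0 (l : R) : bweight l (0%MM : 'X_{1..n}) = 1.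
Proof.
rewrite /bweight; apply: big1 => i _.
by rewrite mnm0E /rising big_ord0 fact0 divr1.
Qed.

Lemma bnorm_delta (l : R) (m0 : 'X_{1..n}) : 0 < l -> bnorm2_le l (delta m0) (bweight l m0).
Proof.
move=> l0 s us.
rewrite (eq_bigr (fun m => if m == m0 then bweight l m0 else 0)); last first.
  move=> m _; rewrite /delta; case: eqP => [->|_].
    by rewrite sqmod1 mulr1.
  by rewrite sqmod0 mulr0.
rewrite -big_mkcond big_const_seq /=.
have -> : count (fun m => m == m0) s = count_mem m0 s by [].
rewrite count_uniq_mem //; case: (m0 \in s) => /=.
  by rewrite addr0.
exact: bweight_ge0.
Qed.

Lemma triv_mone (l : R) : 0 < l -> in_triv l (delta mone).
Proof.
move=> l0; split; first by exists (bweight l mone); exact: bnorm_delta.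
move=> s; apply: functional_extensionality => m.
by rewrite /cperm /delta perm_mone.
Qed.

Lemma triv_0 (l : R) : 0 < l -> in_triv l (delta (0%MM : 'X_{1..n})).
Proof.
move=> l0; split; first by exists (bweight l (0%MM : 'X_{1..n})); exact: bnorm_delta.
move=> s; apply: functional_extensionality => m.
by rewrite /cperm /delta perm_0.
Qed.


Definition rr (l : R) (k : nat) : R := k.+1%:R / (l + k%:R).

Lemma bweight_shift (l : R) (a : 'X_{1..n}) : 0 < l ->
  bweight l (a + mone)%MM = bweight l a * \prod_(i < n) rr l (a i).
Proof.
move=> l0; rewrite /bweight -big_split /=; apply: eq_bigr => i _.
rewrite mnmDE mnmE addn1 factS natrM /rising big_ord_recr /=.
have h1 := rising_gt0 l (a i) l0.
have h2 : 0 < l + (a i)%:R by have := ler0n R (a i); lra.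
rewrite /rr /rising; field.
by apply/andP; split; rewrite gt_eqF.
Qed.

Lemma rr_ge (l : R) k : 1 < l -> 0 <= rr l 0 <= rr l k.
Proof.
move=> l1; have x0 := ler0n R k.
have h2 : 0 < l + k%:R by lra.
rewrite /rr /= ?add0r ?addr0 divr_ge0 ?ler0n ?(ltW (lt_trans ltr01 l1)) //=.
rewrite ler_pdivlMr // mulrAC ler_pdivrMr ?(lt_trans ltr01 l1) // -addn1 natrD.
nra.
Qed.

Lemma rr_ge2 (l : R) k : 1 < l -> (0 < k)%N -> rr l 0 * (2 * l / (l + 1)) <= rr l k.
Proof.
move=> l1 k0; have x0 : 1 <= k%:R :> R by rewrite ler1n.
have h2 : 0 < l + k%:R by lra.
have h3 : 0 < l + 1 by lra.
have -> : rr l 0 * (2 * l / (l + 1)) = 2 / (l + 1).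
  rewrite /rr /= ?add0r ?addr0; field.
  by apply/andP; split; rewrite gt_eqF // (lt_trans ltr01 l1).
rewrite /rr ler_pdivlMr // mulrAC ler_pdivrMr // -addn1 natrD.
nra.
Qed.

Lemma prod_bound (l : R) (a : 'X_{1..n}) : 1 < l -> a != 0%MM ->
  (\prod_(i < n) rr l 0) * (2 * l / (l + 1)) <= \prod_(i < n) rr l (a i).
Proof.
move=> l1 ha.
have [i0 Hi0] : exists i, a i != 0%N.
  case: (pickP (fun i => a i != 0%N)) => [i0 Hi0|H]; first by exists i0.
  exfalso; move/negP: ha; apply; apply/eqP/mnmP => i; rewrite mnm0E.
  by move: (H i) => /negbFE/eqP.
rewrite (bigD1 i0) //= [X in _ <= X](bigD1 i0) //= mulrAC.
have l0 : 0 < l by apply: lt_trans l1.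
apply: ler_pM.
- apply: mulr_ge0; first by case/andP: (rr_ge l 0 l1).
  apply: divr_ge0; last by lra.
  lra.
- by apply: prodr_ge0 => i _; case/andP: (rr_ge l 0 l1).
- by apply: rr_ge2 => //; rewrite lt0n.
- by apply: ler_prod => i _; apply: rr_ge.
Qed.


Lemma mulop_shift (a : coeffs R n) (b : 'X_{1..n}) :
  mulop 'X_[mone] a (b + mone)%MM = a b.
Proof.
by rewrite /mulop msuppX big_seq1 mcoeffX eqxx mul1r lem_addl addmK.
Qed.

Lemma mulop_delta : mulop 'X_[mone] (delta (0%MM : 'X_{1..n})) = delta mone.
Proof.
apply: functional_extensionality => m.
rewrite /mulop msuppX big_seq1 mcoeffX eqxx mul1r /delta.
case: (boolP (mone <= m)%MM) => H.
  suff -> : ((m - mone)%MM == 0%MM) = (m == mone) by []; apply/eqP/eqP => [h|->].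
    by rewrite -(submK H) h add0m.
  by apply/mnmP => i; rewrite mnmBE mnm0E subnn.
case: (m =P mone) => [e|_]; [by rewrite e lepm_refl in H | by []].
Qed.

Lemma mone_sym : ('X_[mone] : {mpoly R[i][n]}) \is symmetric.
Proof.
apply/issymP => s; rewrite msymX; congr mpolyX; apply/mnmP => i.
by rewrite multinomE tnth_mktuple !mnmE.
Qed.

End S.

Theorem proposition4p19 (R : realType) (n : nat) (l : R) :
  (1 < n)%N -> 1 < l ->
  ~ exists U : coeffs R n -> coeffs R n, intertwining_unitary l U.
Proof.
move=> n1 l1 [U [Htr _ Hnorm _ Hint]].
have l0 : 0 < l by apply: lt_trans l1.
have ta1 := triv_0 (n:=n) l l0.
set a1 := delta (0%MM : 'X_{1..n}) in ta1.
have [Hbi Hbs] := Htr _ ta1.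
set b := U a1 in Hbi Hbs.
have HUp : U (delta mone) = mulop 'X_[mone] b.
  by rewrite -mulop_delta; apply: Hint; [exact: mone_sym | exact: ta1].
have Hbound : bnorm2_le l (mulop 'X_[mone] b) (bweight l (mone (n:=n))).
  rewrite -HUp; have := ((Hnorm _ (triv_mone (n:=n) l l0) (bweight l mone)).1 (bnorm_delta l mone l0)); exact.
have b0 : b 0%MM = 0.
  pose i0 : 'I_n := Ordinal (ltnW n1).
  pose i1 : 'I_n := Ordinal n1.
  have := congr1 (fun f => f 0%MM) (Hbs (tperm i0 i1)).
  rewrite /cperm /= odd_tperm.
  have -> : (i0 != i1) = true by [].
  have -> : [multinom (0%MM : 'X_{1..n}) (tperm i0 i1 i) | i < n] = 0%MM.
    by apply/mnmP => i; rewrite mnmE !mnm0E.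
  rewrite /= expr1 mulN1r => h.
  have : b 0%MM *+ 2 = 0 by rewrite mulr2n {1}h addNr.
  by move/eqP; rewrite mulrn_eq0 /= => /eqP.
set c := \prod_(i < n) rr l 0.
set q := 2 * l / (l + 1).
have hc : bweight l (mone (n:=n)) = c.
  have := bweight_shift l (0%MM : 'X_{1..n}) l0.
  rewrite add0m bweight0 mul1r => ->.
  by apply: eq_bigr => i _; rewrite mnm0E.
have c0 : 0 < c.
  apply: prodr_gt0 => i _; rewrite /rr /= addr0 divr_gt0 //.
have q0 : 0 < q by rewrite /q divr_gt0 //; lra.
have key : bnorm2_le l b (q^-1).
  move=> s us.
  have us' : uniq [seq (m + mone)%MM | m <- s].
    by rewrite map_inj_uniq //; exact: can_inj (addmK mone).
  have := Hbound _ us'.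
  rewrite big_map hc => H.
  rewrite -(ler_pM2l (mulr_gt0 c0 q0)) mulfK ?gt_eqF //.
  apply: le_trans H; rewrite mulr_sumr; apply: ler_sum => a _.
  rewrite mulop_shift bweight_shift //.
  case: (a =P 0%MM) => [->|/eqP ha]; first by rewrite b0 sqmod0 !mulr0.
  have hp := prod_bound l a l1 ha.
  have w0 := bweight_ge0 l a l0.
  have s0 := sqmod_ge0 (b a).
  have -> : c * q * (bweight l a * sqmod (b a)) = (bweight l a * sqmod (b a)) * (c * q) by ring.
  have -> : bweight l a * \prod_(i < n) rr l (a i) * sqmod (b a) = (bweight l a * sqmod (b a)) * \prod_(i < n) rr l (a i) by ring.
  by apply: ler_wpM2l => //; apply: mulr_ge0.
have [_ /(_ key) Ha1] := Hnorm a1 ta1 (q^-1).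
have := Ha1 [:: 0%MM] isT; rewrite big_seq1 bweight0 /a1 /delta eqxx sqmod1 mul1r.
rewrite /q invf_div ler_pdivlMr ?mul1r; lra.
Qed.
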